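(* Let $x\in\mathbb{R}^d$ with $\|x\|_2=1$, let $\ket{x}=\sum_{i\in[d]}x_i\ket{i}$, and let $\delta>0$. Consider the following procedure, given access to a unitary $U:\ket{0}\mapsto\ket{x}$, its controlled version, and QRAM: (1) measure $N=\frac{36\ln d}{\delta^2}$ copies of $\ket{x}$ in the standard basis, let $n_i$ be the number of times outcome $i$ is observed, and store $\sqrt{p_i}=\sqrt{n_i/N}$ in QRAM; (2) create $N$ copies of the state $\frac{1}{\sqrt2}\ket{0}\sum_{i}x_i\ket{i}+\frac{1}{\sqrt2}\ket{1}\sum_i\sqrt{p_i}\ket{i}$; (3) apply a Hadamard gate to the first qubit of each copy, giving $\frac12\sum_i\big((x_i+\sqrt{p_i})\ket{0,i}+(x_i-\sqrt{p_i})\ket{1,i}\big)$; (4) measure both registers of each copy in the standard basis and let $n(0,i)$ be the number of times outcome $(0,i)$ is observed; (5) set $\sigma(i)=+1$ if $n(0,i)>0.4Np_i$ and $\sigma(i)=-1$ otherwise; (6) output the vector $\widetilde{X}$ with $\widetilde{X}_i=\sigma(i)\sqrt{p_i}$. Then, with probability at least $1-\frac{1}{d^{0.83}}$, $\|\widetilde{X}-x\|_\infty<(1+\sqrt2)\delta$.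
   Context: $\ket{i}$ denotes the standard basis vectors; $\|\cdot\|_\infty$ is the maximum absolute value of the coordinates; $\ln$ is the natural logarithm. *)

(* Defs.v *)
From HB Require Import structures.
From mathcomp Require Import all_boot all_order all_algebra.
From mathcomp Require Import reals exp.
Set Implicit Arguments. Unset Strict Implicit. Unset Printing Implicit Defensive.
Import Order.TTheory GRing.Theory Num.Theory.
Local Open Scope ring_scope.

Section Tomography.
Variables (R : realType) (d N : nat).

Definition norm2 (v : 'I_d -> R) : R := Num.sqrt (\sum_i v i ^+ 2).
Definition norminf (v : 'I_d -> R) : R := \big[Num.max/0]_i `|v i|.

(* Step (1): N standard-basis measurements of |x>, outcome i w.p. x_i^2. *)
Definition count1 (s : {ffun 'I_N -> 'I_d}) (i : 'I_d) : nat :=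
  #|[set k | s k == i]|.
Definition phat (s : {ffun 'I_N -> 'I_d}) (i : 'I_d) : R :=
  (count1 s i)%:R / N%:R.
Definition prob1 (x : 'I_d -> R) (s : {ffun 'I_N -> 'I_d}) : R :=
  \prod_k x (s k) ^+ 2.

(* Steps (2)-(4): outcome (b,i), b = false for first-qubit value 0,
   has probability ((x_i + sqrt p_i)/2)^2 if b = 0 and
   ((x_i - sqrt p_i)/2)^2 if b = 1. *)
Definition outcome2 (x p : 'I_d -> R) (o : bool * 'I_d) : R :=
  ((x o.2 + (if o.1 then -1 else 1) * Num.sqrt (p o.2)) / 2) ^+ 2.
Definition prob2 (x p : 'I_d -> R) (t : {ffun 'I_N -> bool * 'I_d}) : R :=
  \prod_k outcome2 x p (t k).
Definition count0 (t : {ffun 'I_N -> bool * 'I_d}) (i : 'I_d) : nat :=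
  #|[set k | t k == (false, i)]|.

Definition sigma (p : 'I_d -> R) (t : {ffun 'I_N -> bool * 'I_d}) (i : 'I_d) : R :=
  if (count0 t i)%:R > 4 / 10 * N%:R * p i then 1 else -1.
Definition Xtilde (p : 'I_d -> R) (t : {ffun 'I_N -> bool * 'I_d}) (i : 'I_d) : R :=
  sigma p t i * Num.sqrt (p i).

Definition success_prob (x : 'I_d -> R) (P : ('I_d -> R) -> bool) : R :=
  \sum_(s : {ffun 'I_N -> 'I_d})
    \sum_(t : {ffun 'I_N -> bool * 'I_d} | P (Xtilde (phat s) t))
      prob1 x s * prob2 x (phat s) t.
End Tomography.

Definition num_copies (R : realType) (d : nat) (delta : R) : nat :=
  `|Num.ceil (36 * ln (d%:R : R) / delta ^+ 2)|%N.

(* Main.v *)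
Require Import Defs.
From HB Require Import structures.
From mathcomp Require Import all_boot all_order all_algebra.
From mathcomp Require Import reals exp.
From mathcomp Require Import sequences.
From mathcomp Require Import ring lra.
Import Order.TTheory GRing.Theory Num.Theory.
Local Open Scope ring_scope.


Lemma sum_sub {R : realType} (T : finType) (P Q : pred T) (f : T -> R) :
  (forall t, 0 <= f t) -> (forall t, P t -> Q t) ->
  \sum_(t | P t) f t <= \sum_(t | Q t) f t.
Proof.
move=> f0 PQ; rewrite [X in X <= _]big_mkcond [X in _ <= X]big_mkcond /=.
apply: ler_sum => t _; case Pt: (P t); first by rewrite (PQ t Pt).
by case: (Q t).
Qed.

Lemma union_bound {R : realType} (I T : finType) (B : I -> pred T) (P : pred T)
  (f : T -> R) :
  (forall t, 0 <= f t) -> (forall t, P t -> exists i, B i t) ->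
  \sum_(t | P t) f t <= \sum_i \sum_(t | B i t) f t.
Proof.
move=> f0 PB.
apply: (@le_trans _ _ (\sum_t \sum_(i | B i t) f t)).
  rewrite [X in X <= _]big_mkcond /=; apply: ler_sum => t _.
  case Pt: (P t); last by apply: sumr_ge0.
  have [i Bi] := PB t Pt.
  by rewrite (bigD1 i) //= lerDl sumr_ge0.
by rewrite (exchange_big_dep xpredT).
Qed.

Lemma lerXn {R : realType} (a b : R) n : 0 <= a -> a <= b -> a ^+ n <= b ^+ n.
Proof.
move=> a0 ab; elim: n => [|n IH]; first by rewrite !expr0.
rewrite !exprS; apply: ler_pM => //; exact: exprn_ge0.
Qed.

Lemma chernoff {R : realType} (O : finType) (N : nat) (w : O -> R) (A : pred O)
  (P : pred {ffun 'I_N -> O}) (lam m : R) :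
  (forall o, 0 <= w o) -> \sum_o w o = 1 ->
  (forall t, P t -> lam * m <= lam * (#|[set k | A (t k)]|)%:R) ->
  \sum_(t | P t) \prod_k w (t k) <=
  expR (N%:R * ((\sum_(o | A o) w o) * (expR lam - 1)) - lam * m).
Proof.
move=> w0 w1 HP.
set q := \sum_(o | A o) w o.
pose g o := w o * expR (lam * (A o)%:R).
have g0 o : 0 <= g o by rewrite /g mulr_ge0 // expR_ge0.
have cntE (t : {ffun 'I_N -> O}) : expR (lam * (#|[set k | A (t k)]|)%:R) =
    \prod_k expR (lam * (A (t k))%:R).
  rewrite -expR_sum; congr expR; rewrite -mulr_sumr -natr_sum; congr (_ * _%:R).
  rewrite -sum1_card big_mkcond /=; apply: eq_bigr => k _; rewrite inE.
  by case: (A (t k)).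
have step1 : \sum_(t | P t) \prod_k w (t k) <=
    \sum_(t : {ffun 'I_N -> O}) (\prod_k g (t k)) * expR (- (lam * m)).
  apply: (@le_trans _ _ (\sum_(t | P t) (\prod_k g (t k)) * expR (- (lam * m)))).
    apply: ler_sum => t Pt; rewrite /g big_split /= -cntE -mulrA -expRD.
    rewrite ler_peMr ?prodr_ge0 // (le_trans _ (expR_ge1Dx _)) // lerDl subr_ge0.
    exact: HP.
  by apply: sum_sub => // t; rewrite mulr_ge0 ?expR_ge0 ?prodr_ge0.
have step2 : \sum_(t : {ffun 'I_N -> O}) \prod_k g (t k) = (\sum_o g o) ^+ N.
  have := bigA_distr_bigA (fun (_ : 'I_N) o => g o); rewrite /= => <-.
  by rewrite prodr_const card_ord.
have step3 : \sum_o g o = 1 + q * (expR lam - 1).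
  rewrite -[in X in X + _]w1 /q [X in _ + X * _]big_mkcond mulr_suml -big_split /=.
  apply: eq_bigr => o _.
  rewrite /g; case: (A o); rewrite /= ?mulr1 ?mulr0 ?expR0; ring.
rewrite -mulr_suml step2 in step1.
apply: (le_trans step1).
rewrite expRD ler_wpM2r ?expR_ge0 //.
rewrite expRM_natl; apply: lerXn; first by apply: sumr_ge0.
by rewrite step3 expR_ge1Dx.
Qed.


Lemma eqle {R : realType} (x y : R) : x = y -> x <= y.
Proof. by move->. Qed.

Lemma expR_le_inv {R : realType} (y c : R) : 0 < c -> c <= 1 - y -> expR y <= c^-1.
Proof.
move=> c0 hc.
have h1 : c <= expR (- y) by apply: (le_trans hc); rewrite (le_trans _ (expR_ge1Dx _)).
have -> : expR y = (expR (- y))^-1 by rewrite expRN invrK.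
by rewrite lef_pV2 ?posrE ?expR_gt0.
Qed.

Lemma exp_up_aux {R : realType} (a e : R) : 0 <= a -> 0 < e ->
  a ^+ 2 * (expR (e / (a + e)) - 1) <= a * e.
Proof.
move=> a0 e0; have [->|ap] := eqVneq a 0; first by rewrite expr2 !mul0r.
have apos : 0 < a by rewrite lt_def ap a0.
have h2 : expR (e / (a + e)) <= (a / (a + e))^-1.
  apply: expR_le_inv; first by rewrite divr_gt0 // addr_gt0.
  by apply: eqle; field; rewrite gt_eqF // addr_gt0.
rewrite invf_div in h2.
apply: (@le_trans _ _ (a ^+ 2 * ((a + e) / a - 1))).
  by rewrite ler_wpM2l ?sqr_ge0 // lerD2r.
by apply: eqle; field; rewrite gt_eqF.
Qed.

Lemma ln_aux {R : realType} (b : R) : 0 < b -> - ln b <= b^-1 - 1.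
Proof.
move=> b0; have := expR_ge1Dx (- ln b).
by rewrite expRN lnK ?posrE // => h; lra.
Qed.


Lemma count_phat {R : realType} d N (s : {ffun 'I_N -> 'I_d}) i : (0 < N)%N ->
  (count1 s i)%:R = N%:R * phat R s i.
Proof. by move=> N0; rewrite /phat mulrC divfK // pnatr_eq0 -lt0n. Qed.

Lemma round1 {R : realType} d N (x : 'I_d -> R) (delta L : R) (i : 'I_d) :
  (0 < N)%N -> 0 < delta -> \sum_j x j ^+ 2 = 1 -> 36 * L <= N%:R * delta ^+ 2 ->
  \sum_(s : {ffun 'I_N -> 'I_d} | ~~ (`|Num.sqrt (phat R s i) - `|x i| | <= delta / 3))
    prob1 x s <= 2 * expR (- (4 * L)).
Proof.
move=> N0 d0 hx hN.
set e := delta / 3; set a := `|x i|.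
have e0 : 0 < e by rewrite /e divr_gt0.
have a0 : 0 <= a by rewrite /a normr_ge0.
have hNe : 4 * L <= N%:R * e ^+ 2.
  have -> : e ^+ 2 = delta ^+ 2 / 9 by rewrite /e; field.
  lra.
have Npos : 0 < N%:R :> R by rewrite ltr0n.
have w0 : forall j, 0 <= x j ^+ 2 by move=> j; apply: sqr_ge0.
have xa : x i ^+ 2 = a ^+ 2 by rewrite /a real_normK // num_real.
pose up := fun s : {ffun 'I_N -> 'I_d} => N%:R * (a + e) ^+ 2 < (count1 s i)%:R.
pose dn := fun s : {ffun 'I_N -> 'I_d} =>
  ((count1 s i)%:R < N%:R * (a - e) ^+ 2) && (e < a).
apply: le_trans (@union_bound _ bool _ (fun b : bool => if b then up else dn) _ _ _ _) _.
- by move=> s; rewrite /prob1 prodr_ge0.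
- move=> s bad.
  have p0 : 0 <= phat R s i by rewrite /phat divr_ge0.
  set r := Num.sqrt (phat R s i) in bad.
  have r0 : 0 <= r by rewrite sqrtr_ge0.
  have rr : r ^+ 2 = phat R s i by rewrite sqr_sqrtr.
  have cE := @count_phat R d N s i N0.
  rewrite -ltNge ltr_normr in bad; case/orP: bad => hb.
    exists true; rewrite /up cE -rr; rewrite ltr_pM2l //; nra.
  exists false; rewrite /dn cE -rr; apply/andP; split; last by lra.
  rewrite ltr_pM2l //; nra.
rewrite big_bool /=.
have Hup : \sum_(s | up s) prob1 x s <= expR (- (4 * L)).
  have lam0 : 0 <= e / (a + e) by rewrite divr_ge0 // ?addr_ge0 // ltW.
  have H := @chernoff R _ N (fun j => x j ^+ 2) (fun j => j == i) up
    (e / (a + e)) (N%:R * (a + e) ^+ 2) w0 hx.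
  apply: le_trans (H _) _.
    move=> t ut; apply: ler_wpM2l => //; exact: ltW ut.
  rewrite big_pred1_eq ler_expR xa.
  have k1 := @exp_up_aux R a e a0 e0.
  have k2 : e / (a + e) * (N%:R * (a + e) ^+ 2) = N%:R * (e * (a + e)).
    by field; rewrite gt_eqF // ltr_wpDl.
  have k1' : N%:R * (a ^+ 2 * (expR (e / (a + e)) - 1)) <= N%:R * (a * e).
    by rewrite ler_wpM2l // ltW.
  have k3 : N%:R * (a * e) - N%:R * (e * (a + e)) = - (N%:R * e ^+ 2) by ring.
  lra.
have Hdn : \sum_(s | dn s) prob1 x s <= expR (- (4 * L)).
  have [ea|ae] := ltP e a; last first.
    rewrite big_pred0 ?expR_ge0 // => s; rewrite /dn.
    by rewrite (ltNge e a) ae andbF.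
  set b := (a - e) / a.
  have apos : 0 < a by lra.
  have b0 : 0 < b by rewrite divr_gt0 // subr_gt0.
  have b1 : b <= 1 by rewrite ler_pdivrMr //; lra.
  have lam0 : ln b <= 0 by rewrite ln_le0.
  have H := @chernoff R _ N (fun j => x j ^+ 2) (fun j => j == i) dn
    (ln b) (N%:R * (a - e) ^+ 2) w0 hx.
  apply: le_trans (H _) _.
    move=> t /andP [ut _].
    have : (count1 t i)%:R <= N%:R * (a - e) ^+ 2 :> R by exact: ltW ut.
    rewrite /count1; nra.
  rewrite big_pred1_eq ler_expR xa lnK ?posrE //.
  have k1 := @ln_aux R b b0.
  have k2 : b^-1 - 1 = e / (a - e) by rewrite /b invf_div; field; lra.
  have k4 : 0 <= N%:R * (a - e) ^+ 2 :> R by rewrite mulr_ge0 ?sqr_ge0 // ltW.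
  have k5 : - ln b * (N%:R * (a - e) ^+ 2) <= e / (a - e) * (N%:R * (a - e) ^+ 2).
    by rewrite -k2 ler_wpM2r.
  have k6 : e / (a - e) * (N%:R * (a - e) ^+ 2) = N%:R * (e * (a - e)).
    by field; lra.
  have k7 : N%:R * (a ^+ 2 * (b - 1)) = - (N%:R * (a * e)).
    by rewrite /b; field; lra.
  have k3 : - (N%:R * (a * e)) + N%:R * (e * (a - e)) = - (N%:R * e ^+ 2) by ring.
  lra.
lra.
Qed.


Lemma sqrt2_ge {R : realType} : 1414 / 1000 <= Num.sqrt (2 : R).
Proof.
have h : (1414 / 1000 : R) = Num.sqrt ((1414 / 1000) ^+ 2).
  by rewrite sqrtr_sqr ger0_norm // divr_ge0.
by rewrite h ler_wsqrtr //; lra.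
Qed.

Lemma outcome2_sum {R : realType} d (x p : 'I_d -> R) :
  (forall j, 0 <= p j) -> \sum_j p j = 1 -> \sum_j x j ^+ 2 = 1 ->
  \sum_o outcome2 x p o = 1.
Proof.
move=> p0 hp hx.
have -> : \sum_o outcome2 x p o = \sum_b \sum_j outcome2 x p (b, j).
  by rewrite pair_bigA; apply: eq_bigr => -[].
rewrite big_bool -big_split /=.
rewrite (eq_bigr (fun j => (x j ^+ 2 + p j) / 2)); last first.
  move=> j _; rewrite /outcome2 /=.
  have := sqr_sqrtr (p0 j); set s := Num.sqrt (p j) => hs.
  rewrite -hs.
  by field.
by rewrite -mulr_suml big_split /= hx hp; field.
Qed.

Lemma g_aux {R : realType} (x s delta : R) : 0 < delta -> 2414/1000*delta <= s + x ->
  0 <= s -> s <= x + delta / 3 ->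
  ((x + s) / 2) ^+ 2 * (18 / 25 - 1) + 7 / 18 * (4 / 10 * s ^+ 2) <= - (delta ^+ 2 / 9).
Proof.
move=> d0 hS s0 hs.
set S := s + x in hS.
have hs2 : s ^+ 2 <= ((S + delta / 3) / 2) ^+ 2.
  rewrite -subr_ge0. have -> : ((S + delta / 3) / 2) ^+ 2 - s ^+ 2 =
    ((S + delta / 3) / 2 - s) * ((S + delta / 3) / 2 + s) by ring.
  apply: mulr_ge0; rewrite /S; lra.
have -> : x + s = S by rewrite /S addrC.
have h1 : 0 <= (S - 2414/1000*delta) * (S - 2414/1000*delta) by nra.
have h2 : 0 <= (S - 2414/1000*delta) * delta by nra.
nra.
Qed.
Lemma h_aux {R : realType} (x s delta : R) : 0 < delta -> 2414/1000*delta <= s - x ->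
  0 <= s -> `|s + x| <= delta / 3 ->
  ((x + s) / 2) ^+ 2 * (2 - 1) - 1 / 2 * (4 / 10 * s ^+ 2) <= - (delta ^+ 2 / 9).
Proof.
move=> d0 hS s0 hs.
have hsx2 : (s + x) ^+ 2 <= (delta / 3) ^+ 2.
  rewrite -subr_ge0. have -> : (delta / 3) ^+ 2 - (s + x) ^+ 2 =
    (delta / 3 - (s + x)) * (delta / 3 + (s + x)) by ring.
  move: hs; rewrite ler_norml => /andP [h1 h2].
  apply: mulr_ge0; lra.
have hs1 : 104/100 * delta <= s by move: hs; rewrite ler_norml => /andP [h1 h2]; lra.
have h3 : (104/100 * delta) ^+ 2 <= s ^+ 2.
  rewrite -subr_ge0. have -> : s ^+ 2 - (104/100 * delta) ^+ 2 =
    (s - 104/100 * delta) * (s + 104/100 * delta) by ring.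
  apply: mulr_ge0; lra.
have -> : x + s = s + x by rewrite addrC.
nra.
Qed.

Lemma round2 {R : realType} d N (x p : 'I_d -> R) (delta L : R) (i : 'I_d) :
  0 < delta -> (forall j, 0 <= p j) -> \sum_j p j = 1 -> \sum_j x j ^+ 2 = 1 ->
  36 * L <= N%:R * delta ^+ 2 ->
  `|Num.sqrt (p i) - `|x i| | <= delta / 3 ->
  \sum_(t : {ffun 'I_N -> bool * 'I_d} |
      ~~ (`|Xtilde p t i - x i| < (1 + Num.sqrt 2) * delta))
    prob2 x p t <= expR (- (4 * L)).
Proof.
move=> d0 p0 hp hx hN hs.
set C := 1 + Num.sqrt 2.
have C0 : 2414 / 1000 <= C by rewrite /C; have := @sqrt2_ge R; lra.
set s := Num.sqrt (p i) in hs *.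
have s0 : 0 <= s by rewrite sqrtr_ge0.
have ss : s ^+ 2 = p i by rewrite sqr_sqrtr.
set m := 4 / 10 * N%:R * p i.
have N0 : 0 <= N%:R :> R by [].
have w0 : forall o, 0 <= outcome2 x p o by move=> o; rewrite /outcome2 sqr_ge0.
have w1 := @outcome2_sum R d x p p0 hp hx.
set bad := fun t : {ffun 'I_N -> bool * 'I_d} =>
  ~~ (`|Xtilde p t i - x i| < C * delta).
have XE (t : {ffun 'I_N -> bool * 'I_d}) : Xtilde p t i = if m < (count0 t i)%:R then s else - s.
  by rewrite /Xtilde /sigma -/m; case: ifP => _; rewrite ?mul1r ?mulN1r.
have H := @chernoff R _ N (outcome2 x p) (fun o => o == (false, i)) bad.
rewrite /prob2.
have [xpos|xneg] := ltP 0 (x i).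
  have ax : `|x i| = x i by rewrite gtr0_norm.
  rewrite ax in hs.
  have key (t : {ffun 'I_N -> bool * 'I_d}) : bad t -> ((count0 t i)%:R <= m) && (C * delta <= s + x i).
    rewrite /bad XE; case: ifP => hc; rewrite -leNgt.
      move=> h; exfalso; move: h; apply/negP; rewrite -ltNge.
      by apply: (le_lt_trans hs); nra.
    move=> h; apply/andP; split; first by rewrite leNgt hc.
    by move: h; rewrite -opprD normrN ger0_norm //; lra.
  have [SC|SC] := leP (C * delta) (s + x i); last first.
    rewrite big_pred0 ?expR_ge0 // => t; have := key t; rewrite /bad.
    by case: (~~ _) => // /(_ isT) /andP [_ h]; lra.
  set b : R := 18 / 25.
  have b0 : 0 < b by rewrite /b; lra.
  have lam0 : ln b <= 0 by rewrite ln_le0 // /b; lra.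
  apply: le_trans (H (ln b) m w0 w1 _) _.
    move=> t /key /andP [h _]; rewrite /count0 in h; nra.
  rewrite big_pred1_eq ler_expR lnK ?posrE // /outcome2 /= mul1r.
  have k1 := @ln_aux R b b0.
  have k2 : b^-1 - 1 = 7 / 18 by rewrite /b; field.
  have m0 : 0 <= m by rewrite /m; have := p0 i; nra.
  have k5 : - ln b * m <= 7 / 18 * m by rewrite -k2 ler_wpM2r.
  have k6 : ((x i + s) / 2) ^+ 2 * (b - 1) + 7 / 18 * (4 / 10 * p i)
      <= - (delta ^+ 2 / 9).
    rewrite -ss /b.
    have hsx : s <= x i + delta / 3 by move: hs; rewrite ler_norml; lra.
    apply: g_aux => //; nra.
  have k7 : N%:R * (((x i + s) / 2) ^+ 2 * (b - 1)) + 7 / 18 * m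
      <= N%:R * (- (delta ^+ 2 / 9)).
    have -> : N%:R * (((x i + s) / 2) ^+ 2 * (b - 1)) + 7 / 18 * m =
       N%:R * (((x i + s) / 2) ^+ 2 * (b - 1) + 7 / 18 * (4 / 10 * p i)) by rewrite /m; ring.
    by rewrite ler_wpM2l.
  have e1 : N%:R * - (delta ^+ 2 / 9) = - (N%:R * delta ^+ 2) / 9 by ring.
  have e2 : - ln b * m = - (ln b * m) by ring.
  rewrite -/s.
  lra.
have ax : `|x i| = - x i by rewrite ler0_norm.
rewrite ax in hs.
have key (t : {ffun 'I_N -> bool * 'I_d}) : bad t -> (m < (count0 t i)%:R) && (C * delta <= s - x i).
  rewrite /bad XE; case: ifP => hc; rewrite -leNgt.
    move=> h /=; have hx0 : 0 <= s - x i by lra.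
    by move: h; rewrite ger0_norm.
  move=> h; exfalso; move: h; apply/negP; rewrite -ltNge.
  rewrite -opprD normrN.
  by move: hs; rewrite opprK => hs; apply: (le_lt_trans hs); nra.
have [SC|SC] := leP (C * delta) (s - x i); last first.
  rewrite big_pred0 ?expR_ge0 // => t; have := key t; rewrite /bad.
  by case: (~~ _) => // /(_ isT) /andP [_ h]; lra.
have lam0 : 0 <= ln (2 : R) by rewrite ln_ge0 //; lra.
apply: le_trans (H (ln 2) m w0 w1 _) _.
  move=> t /key /andP [h _]; rewrite /count0 in h; nra.
rewrite big_pred1_eq ler_expR lnK ?posrE // /outcome2 /= mul1r.
have k1 := @ln_aux R 2 (ltr0Sn _ _).
have m0 : 0 <= m by rewrite /m; have := p0 i; nra.
have k5 : 1 / 2 * m <= ln 2 * m by rewrite ler_wpM2r //; lra.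
have k6 : ((x i + s) / 2) ^+ 2 * (2 - 1) - 1 / 2 * (4 / 10 * p i)
    <= - (delta ^+ 2 / 9).
  rewrite -ss.
  have hs2 : `|s + x i| <= delta / 3 by move: hs; rewrite opprK.
  apply: h_aux => //; nra.
have k7 : N%:R * (((x i + s) / 2) ^+ 2 * (2 - 1)) - 1 / 2 * m
    <= N%:R * (- (delta ^+ 2 / 9)).
  have -> : N%:R * (((x i + s) / 2) ^+ 2 * (2 - 1)) - 1 / 2 * m =
     N%:R * (((x i + s) / 2) ^+ 2 * (2 - 1) - 1 / 2 * (4 / 10 * p i)) by rewrite /m; ring.
  by rewrite ler_wpM2l.
rewrite -/s.
have e1 : N%:R * - (delta ^+ 2 / 9) = - (N%:R * delta ^+ 2) / 9 by ring.
lra.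
Qed.


Lemma prod_sum {R : realType} (O : finType) N (w : O -> R) :
  \sum_(t : {ffun 'I_N -> O}) \prod_k w (t k) = (\sum_o w o) ^+ N.
Proof.
have := bigA_distr_bigA (fun (_ : 'I_N) o => w o); rewrite /= => <-.
by rewrite prodr_const card_ord.
Qed.

Lemma norminf_lt {R : realType} d (v : 'I_d -> R) c :
  0 < c -> (forall i, `|v i| < c) -> norminf v < c.
Proof.
move=> c0 h; rewrite /norminf; elim/big_ind: _ => //.
by move=> a b ha hb; rewrite gt_max ha hb.
Qed.

Lemma count1_sum d N (s : {ffun 'I_N -> 'I_d}) : (\sum_i count1 s i)%N = N.
Proof.
have -> : (\sum_i count1 s i = \sum_i \sum_k (s k == i))%N.
  apply: eq_bigr => i _; rewrite /count1 -sum1_card big_mkcond /=.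
  by apply: eq_bigr => k _; rewrite inE; case: (s k == i).
rewrite exchange_big /= -[RHS]card_ord -sum1_card; apply: eq_bigr => k _.
rewrite (bigD1 (s k)) //= eqxx big1 // => j /negbTE; rewrite eq_sym => ->.
by [].
Qed.

Lemma phat_sum {R : realType} d N (s : {ffun 'I_N -> 'I_d}) : (0 < N)%N ->
  \sum_i phat R s i = 1.
Proof.
move=> N0; rewrite /phat -mulr_suml -natr_sum count1_sum divff //.
by rewrite pnatr_eq0 -lt0n.
Qed.


Theorem theorem9 (R : realType) (d : nat) (x : 'I_d -> R) (delta : R)
  (hx : norm2 x = 1) (hdelta : 0 < delta) :
  success_prob (num_copies d delta) x
    (fun X => norminf (fun i => X i - x i) < (1 + Num.sqrt 2) * delta)
  >= 1 - 1 / ((d%:R : R) `^ (83 / 100)).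
Proof.
have hx2 : \sum_j x j ^+ 2 = 1.
  have S0 : 0 <= \sum_j x j ^+ 2 by apply: sumr_ge0 => j _; apply: sqr_ge0.
  by rewrite -(sqr_sqrtr S0); move: hx; rewrite /norm2 => ->; rewrite expr1n.
have sp0 : forall N P, 0 <= success_prob N x P.
  move=> N P; rewrite /success_prob; apply: sumr_ge0 => s _; apply: sumr_ge0 => t _.
  by rewrite mulr_ge0 // /prob1 /prob2 prodr_ge0 // => k _; rewrite /outcome2 sqr_ge0.
case: d x hx hx2 sp0 => [|[|d]] x hx hx2 sp0.
- by move: hx2; rewrite big_ord0 => /eqP; rewrite eq_sym oner_eq0.
- by rewrite powR1 divr1 subrr.
set D := d.+2.
have D2 : 2 <= D%:R :> R by rewrite ler_nat.
set L := ln (D%:R : R).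
have L0 : 0 < L by rewrite ln_gt0 //; lra.
have DE : D%:R = expR L by rewrite lnK // posrE; lra.
set N := num_copies D delta.
have hN : 36 * L <= N%:R * delta ^+ 2.
  have dd : 0 < delta ^+ 2 by rewrite exprn_gt0.
  rewrite -ler_pdivrMr // /N /num_copies -/L natr_absz.
  apply: (le_trans (ceil_ge _)); rewrite ler_int; exact: ler_norm.
have N0 : (0 < N)%N.
  rewrite lt0n; apply/eqP => N0; rewrite N0 mul0r in hN; lra.
set e := expR (- (4 * L)).
have e0 : 0 <= e by rewrite expR_ge0.
set C := 1 + Num.sqrt 2.
have C0 : 0 < C * delta by rewrite mulr_gt0 // ltr_wpDr ?sqrtr_ge0.
set P := (fun X : 'I_D -> R => norminf (fun i : 'I_D => X i - x i) < C * delta).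
set G := fun s : {ffun 'I_N -> 'I_D} =>
  [forall i, `|Num.sqrt (phat R s i) - `|x i| | <= delta / 3].
have p0 (s : {ffun 'I_N -> 'I_D}) j : 0 <= phat R s j by rewrite /phat divr_ge0.
have tot (s : {ffun 'I_N -> 'I_D}) : \sum_(t : {ffun 'I_N -> bool * 'I_D}) prob2 x (phat R s) t = 1.
  rewrite /prob2 prod_sum outcome2_sum ?expr1n //; exact: phat_sum.
have main (s : {ffun 'I_N -> 'I_D}) :
    1 - (D%:R * e + (if G s then 0 else 1)) <=
    \sum_(t : {ffun 'I_N -> bool * 'I_D} | P (Xtilde (phat R s) t)) prob2 x (phat R s) t.
  have ht : \sum_(t : {ffun 'I_N -> bool * 'I_D} | P (Xtilde (phat R s) t)) prob2 x (phat R s) t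
     + \sum_(t : {ffun 'I_N -> bool * 'I_D} | ~~ P (Xtilde (phat R s) t)) prob2 x (phat R s) t = 1.
    by rewrite -(tot s) [RHS](bigID (fun t => P (Xtilde (phat R s) t))) /=.
  suff : \sum_(t : {ffun 'I_N -> bool * 'I_D} | ~~ P (Xtilde (phat R s) t)) prob2 x (phat R s) t
      <= D%:R * e + (if G s then 0 else 1) by lra.
  have F1 : \sum_(t : {ffun 'I_N -> bool * 'I_D} | ~~ P (Xtilde (phat R s) t)) prob2 x (phat R s) t <= 1.
    rewrite -(tot s); apply: sum_sub => // t.
    by rewrite /prob2 prodr_ge0 // => k _; rewrite /outcome2 sqr_ge0.
  have De0 : 0 <= D%:R * e by rewrite mulr_ge0.
  case: ifP => Gs; last by lra.
  rewrite addr0.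
  apply: le_trans (@union_bound _ 'I_D _
    (fun i t => ~~ (`|Xtilde (phat R s) t i - x i| < C * delta)) _ _ _ _) _.
  - by move=> t; rewrite /prob2 prodr_ge0 // => k _; rewrite /outcome2 sqr_ge0.
  - move=> t nP.
    case/boolP: [exists i, ~~ (`|Xtilde (phat R s) t i - x i| < C * delta)].
      by move=> /existsP [i hi]; exists i.
    move=> /existsPn h; exfalso; move/negP: nP; apply; rewrite /P.
    by apply: norminf_lt => // i; have := h i; rewrite negbK.
  apply: (@le_trans _ _ (\sum_(i : 'I_D) e)); last first.
    by rewrite sumr_const card_ord mulr_natl.
  apply: ler_sum => i _.
  apply: round2 => //; first exact: phat_sum.
  by move/forallP: Gs => /(_ i).
have pr0 (s : {ffun 'I_N -> 'I_D}) : 0 <= prob1 x s.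
  by rewrite /prob1 prodr_ge0 // => k _; rewrite sqr_ge0.
have s1 : \sum_(s : {ffun 'I_N -> 'I_D}) prob1 x s = 1.
  have := @prod_sum R _ N (fun j : 'I_D => x j ^+ 2); rewrite hx2 expr1n => <-.
  by [].
rewrite /success_prob.
apply: (@le_trans _ _ (\sum_(s : {ffun 'I_N -> 'I_D})
    prob1 x s * (1 - (D%:R * e + (if G s then 0 else 1))))); last first.
  apply: ler_sum => s _; rewrite -mulr_sumr; apply: ler_wpM2l => //; exact: main.
have E : \sum_(s : {ffun 'I_N -> 'I_D}) prob1 x s * (1 - (D%:R * e + (if G s then 0 else 1)))
  = \sum_(s : {ffun 'I_N -> 'I_D}) prob1 x s - D%:R * e * \sum_(s : {ffun 'I_N -> 'I_D}) prob1 x s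
    - \sum_(s : {ffun 'I_N -> 'I_D}) prob1 x s * (if G s then 0 else 1).
  rewrite mulr_sumr -!sumrB; apply: eq_bigr => s _; ring.
have sb : \sum_(s : {ffun 'I_N -> 'I_D}) prob1 x s * (if G s then 0 else 1)
    = \sum_(s : {ffun 'I_N -> 'I_D} | ~~ G s) prob1 x s.
  rewrite [RHS]big_mkcond; apply: eq_bigr => s _; case: (G s) => /=.
    by rewrite mulr0.
  by rewrite mulr1.
have UB : \sum_(s : {ffun 'I_N -> 'I_D} | ~~ G s) prob1 x s <= D%:R * (2 * e).
  apply: le_trans (@union_bound _ 'I_D _
    (fun i s => ~~ (`|Num.sqrt (phat R s i) - `|x i| | <= delta / 3)) _ _ _ _) _.
  - by [].
  - by move=> s /forallPn [i hi]; exists i.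
  apply: (@le_trans _ _ (\sum_(i : 'I_D) 2 * e)); last first.
    by rewrite sumr_const card_ord -[X in X <= _]mulr_natl.
  apply: ler_sum => i _.
  exact: (@round1 R D N x delta L i N0 hdelta hx2 hN).
rewrite E s1 sb mulr1.
have k1 : D%:R * e = expR (- (3 * L)) by rewrite DE /e -expRD; congr expR; ring.
have k2 : expR (- (83 / 100 * L)) = expR (- (3 * L)) * expR (217 / 100 * L).
  by rewrite -expRD; congr expR; lra.
have k3 : 4 <= expR (217 / 100 * L).
  apply: (@le_trans _ _ (expR (2%:R * L))); last by rewrite ler_expR; lra.
  rewrite expRM_natl -DE; nra.
have k4 : 0 < expR (- (3 * L)) by apply: expR_gt0.
have k5 : 1 / D%:R `^ (83 / 100) = expR (- (83 / 100 * L)).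
  have Dn0 : (D%:R : R) != 0 by rewrite pnatr_eq0.
  rewrite /powR (negbTE Dn0) div1r -expRN.
  by rewrite -/L.
rewrite k5 k2.
have k6 : D%:R * (2 * e) = 2 * expR (- (3 * L)) by rewrite -k1; ring.
nra.
Qed.
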